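(* For every $n\ge 3$ and every $0\le h\le n-2$, $\kappa_s^{(h)}(S_{n,2})=n-1$.
   Context: For integers $1\le k\le n-1$, let $I_n=\{1,\dots,n\}$ and $P(n,k)$ the set of $k$-permutations $p_1p_2\cdots p_k$ of distinct elements of $I_n$. The $(n,k)$-star graph $S_{n,k}$ has vertex set $P(n,k)$; a vertex $p=p_1p_2\cdots p_k$ is adjacent to (a) each vertex obtained by swapping $p_1$ with $p_i$ for $2\le i\le k$, and (b) each vertex $\alpha p_2\cdots p_k$ with $\alpha\in I_n\setminus\{p_1,\dots,p_k\}$. For a connected graph $G$ and integer $h\ge 0$, a set $S\subseteq V(G)$ is an $h$-cut if $G-S$ is disconnected and has minimum degree at least $h$; $\kappa_s^{(h)}(G)$ is the minimum cardinality of an $h$-cut of $G$. *)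

(* Defs.v *)
From mathcomp Require Import all_boot.
Set Implicit Arguments.
Unset Strict Implicit.
Unset Printing Implicit Defensive.

Definition del_rel (T : finType) (e : rel T) (S : {set T}) : rel T :=
  [rel x y | [&& x \notin S, y \notin S & e x y]].

Definition connected_graph (T : finType) (e : rel T) : Prop :=
  forall x y : T, connect e x y.

Definition disconnected_after (T : finType) (e : rel T) (S : {set T}) : Prop :=
  exists x y : T, [/\ x \notin S, y \notin S & ~~ connect (del_rel e S) x y].

Definition min_deg_after_ge (T : finType) (e : rel T) (S : {set T}) (h : nat) : Prop :=
  forall x : T, x \notin S -> h <= #|[set y | (y \notin S) && e x y]|.

Definition h_cut (T : finType) (e : rel T) (h : nat) (S : {set T}) : Prop :=
  disconnected_after e S /\ min_deg_after_ge e S h.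

Definition kappa_s_h_eq (T : finType) (e : rel T) (h m : nat) : Prop :=
  (exists S : {set T}, h_cut e h S /\ #|S| = m) /\
  (forall S : {set T}, h_cut e h S -> m <= #|S|).

(* k-permutations of I_n (I_n modelled as 'I_n = {0,...,n-1}) *)
Definition kperm (n k : nat) := {t : k.-tuple 'I_n | uniq t}.

Definition kseq (n k : nat) (p : kperm n k) : seq nat :=
  map (@nat_of_ord n) (val p).

Definition swap0 (s : seq nat) (i : nat) : seq nat :=
  set_nth 0 (set_nth 0 s 0 (nth 0 s i)) i (nth 0 s 0).

Definition star_adj (n k : nat) : rel (kperm n k) :=
  [rel p q |
    (* (a) swap p_1 with p_i, 2 <= i <= k *)
    [exists i : 'I_k, (0 < (i : nat)) && (kseq q == swap0 (kseq p) i)]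
    || ((nth 0 (kseq q) 0 \notin kseq p) && (behead (kseq q) == behead (kseq p)))].

(* Main.v *)
Require Import Defs.
From mathcomp Require Import all_boot zify.
Set Implicit Arguments. Unset Strict Implicit.

Section S.
Variable n : nat.
Notation V := (kperm n 2).
Definition v1 (v : V) : 'I_n := tnth (sval v) (@Ordinal 2 0 isT).
Definition v2 (v : V) : 'I_n := tnth (sval v) (@Ordinal 2 1 isT).

Lemma kseqE v : kseq v = [:: (v1 v : nat); (v2 v : nat)].
Proof.
case: v => [[[|a [|b [|c s]]] //= Hs] Hu].
Qed.

Lemma v12 v : v1 v != v2 v.
Proof.
case: v => [[[|a [|b [|c s]]] //= Hs] Hu]; rewrite /v1 /v2 /tnth /=.
by move: Hu; rewrite /= inE andbT.
Qed.

Lemma vext u w : v1 u = v1 w -> v2 u = v2 w -> u = w.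
Proof.
case: u => [[[|a [|b [|c s]]] //= Hs] Hu]; case: w => [[[|a' [|b' [|c' s']]] //= Hs'] Hu'].
rewrite /v1 /v2 /tnth /= => e1 e2; apply: val_inj; apply: val_inj; by rewrite /= e1 e2.
Qed.
Definition vt (a b : 'I_n) (d : V) : V := odflt d (insub [tuple a; b]).

Lemma vtE a b d : a != b -> v1 (vt a b d) = a /\ v2 (vt a b d) = b.
Proof.
move=> ab; rewrite /vt insubT /=; first by rewrite inE andbT.
move=> ?; split; by [].

Qed.

Lemma adjE u w : star_adj u w =
  ((v1 w == v2 u) && (v2 w == v1 u)) ||
  [&& v1 w != v1 u, v1 w != v2 u & v2 w == v2 u].
Proof.
rewrite /star_adj /= !kseqE /=.
have -> : [exists i : 'I_2, (0 < (i : nat)) &&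
   ([:: (v1 w : nat); (v2 w : nat)] == swap0 [:: (v1 u : nat); (v2 u : nat)] i)]
   = ((v1 w == v2 u) && (v2 w == v1 u)).
  apply/existsP/idP.
    case=> -[[|[|i]] Hi] //=; rewrite /swap0 /=.
    by case/andP=> H1 /andP[H2 _]; rewrite -!val_eqE /= H1 H2.
  move=> H; exists (@Ordinal 2 1 isT) => /=; rewrite /swap0 /=.
  by move: H => /andP[/eqP -> /eqP ->].
rewrite !inE negb_or -andbA eqseq_cons andbT. by [].
Qed.
Notation E S := (del_rel (@star_adj n 2) S).

Lemma clique_adj u w : v2 u = v2 w -> v1 u != v1 w -> star_adj u w.
Proof.
move=> e ne; rewrite adjE; apply/orP; right.
rewrite eq_sym ne -e eqxx andbT /=; rewrite e; exact: v12.
Qed.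

Lemma swap_adj u w : v1 w = v2 u -> v2 w = v1 u -> star_adj u w.
Proof. by move=> e1 e2; rewrite adjE e1 e2 !eqxx. Qed.

Lemma same_clique (S : {set V}) u w : u \notin S -> w \notin S -> v2 u = v2 w ->
  connect (E S) u w.
Proof.
move=> uS wS e; case: (eqVneq (v1 u) (v1 w)) => e1.
  by rewrite (vext e1 e) connect0.
by apply: connect1; rewrite /del_rel /= uS wS clique_adj.
Qed.

Lemma swap_step (S : {set V}) u w : u \notin S -> w \notin S ->
  v1 w = v2 u -> v2 w = v1 u -> connect (E S) u w.
Proof. by move=> uS wS e1 e2; apply: connect1; rewrite /del_rel /= uS wS swap_adj. Qed.

Lemma conn (S : {set V}) : 2 <= n -> #|S| <= n - 2 ->
  forall x y, x \notin S -> y \notin S -> connect (E S) x y.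
Proof.
move=> n2 cS x y xS yS.
set b := v2 x; set d := v2 y.
case: (eqVneq b d) => bd; first exact: same_clique.
pose rf (r : 'I_n) := if r == d then (vt d b x \notin S) && (vt b d x \notin S)
   else [&& vt r b x \notin S, vt b r x \notin S, vt d r x \notin S & vt r d x \notin S].
have [r /andP[rb fr] | none] := pickP [pred r | (r != b) && rf r].
  have db : d != b by rewrite eq_sym.
  move: fr; rewrite /rf; case: (eqVneq r d) => [erd | rd].
    case/andP=> s1 s2.
    have [a1 a2] := vtE x db; have [c1 c2] := vtE x bd.
    apply: (connect_trans (y := vt d b x)); first by apply: same_clique.
    apply: (connect_trans (y := vt b d x)); first by apply: swap_step; rewrite ?a1 ?a2 ?c1 ?c2.
    by apply: same_clique.
  case/and4P=> s1 s2 s3 s4.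
  have br : b != r by rewrite eq_sym.
  have dr : d != r by rewrite eq_sym.
  have [a1 a2] := vtE x rb; have [c1 c2] := vtE x br.
  have [e1 e2] := vtE x dr; have [f1 f2] := vtE x rd.
  apply: (connect_trans (y := vt r b x)); first by apply: same_clique.
  apply: (connect_trans (y := vt b r x)); first by apply: swap_step; rewrite ?a1 ?a2 ?c1 ?c2.
  apply: (connect_trans (y := vt d r x)); first by apply: same_clique; rewrite ?c2 ?e2.
  apply: (connect_trans (y := vt r d x)); first by apply: swap_step; rewrite ?e1 ?e2 ?f1 ?f2.
  by apply: same_clique.
pose g (v : V) := if v2 v == b then v1 v else if v1 v == b then v2 v
                  else if v1 v == d then v2 v else v1 v.
have sub : [set~ b] \subset g @: S.
  apply/subsetP => r; rewrite !inE => rb.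
  have key : forall v, v \in S -> g v = r -> r \in g @: S.
    by move=> v vS gv; apply/imsetP; exists v.
  move: (none r); rewrite /= rb /= /rf.
  have db : d != b by rewrite eq_sym.
  case: (eqVneq r d) => [erd | rd].
    have [a1 a2] := vtE x db; have [c1 c2] := vtE x bd.
    rewrite -!negb_or => /negbFE /orP[] vS.
      by apply: (key _ vS); rewrite /g a1 a2 eqxx erd.
    by apply: (key _ vS); rewrite /g c1 c2 (negbTE db) eqxx erd.
  have br : b != r by rewrite eq_sym.
  have dr : d != r by rewrite eq_sym.
  have [a1 a2] := vtE x rb; have [c1 c2] := vtE x br.
  have [e1 e2] := vtE x dr; have [f1 f2] := vtE x rd.
  rewrite -!negb_or => /negbFE /or4P[] vS.
  - by apply: (key _ vS); rewrite /g a1 a2 eqxx.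
  - by apply: (key _ vS); rewrite /g c1 c2 (negbTE rb) eqxx.
  - by apply: (key _ vS); rewrite /g e1 e2 (negbTE rb) (negbTE db) eqxx.
  - by apply: (key _ vS); rewrite /g f1 f2 (negbTE db) (negbTE rb) (negbTE rd).
have := leq_trans (subset_leq_card sub) (leq_imset_card g S).
rewrite cardsC1 card_ord => H.
have : n.-1 <= n - 2 by apply: leq_trans H cS.
move: n2; clear; lia.
Qed.

Lemma closure (T : finType) (e : rel T) (C : pred T) :
  (forall u w, C u -> e u w -> C w) -> forall x y, C x -> connect e x y -> C y.
Proof.
move=> H x y Cx /connectP[p]; elim: p x Cx => [|z p IH] x Cx /=.
  by move=> _ ->.
by case/andP=> exz pz ly; exact: IH (H _ _ Cx exz) pz ly.
Qed.

Lemma card2C (a b : 'I_n) : a != b -> #|~: [set a; b]| = n - 2.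
Proof. by move=> ab; rewrite cardsCs setCK cards2 ab card_ord. Qed.

Lemma card3C (a b c : 'I_n) : a != b -> a != c -> b != c ->
  #|~: [set a; b; c]| = n - 3.
Proof.
move=> ab ac bc; rewrite cardsCs setCK card_ord.
have -> : [set a; b; c] = a |: [set b; c] by apply/setP=> z; rewrite !inE ?orbA.
rewrite cardsU1 cards2 bc !inE negb_or ab ac /=.
by rewrite subnS.
Qed.

Section Up.
Variables (b0 : 'I_n) (x0 : V).
Definition S0 := [set v : V | v1 v == b0].

Lemma S0_card : #|S0| = n - 1.
Proof.
have inj : {in S0 &, injective v2}.
  move=> u w; rewrite !inE => /eqP u1 /eqP w1 e; apply: vext => //; by rewrite u1 w1.
rewrite -(card_in_imset inj).
have -> : v2 @: S0 = [set~ b0].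
  apply/setP => c; rewrite !inE; apply/imsetP/idP.
    case=> v; rewrite inE => /eqP v1b ->; rewrite -v1b eq_sym; exact: v12.
  move=> cb; have bc : b0 != c by rewrite eq_sym.
  have [a1 a2] := vtE x0 bc.
  by exists (vt b0 c x0); rewrite ?inE ?a1 ?a2.
by rewrite cardsC1 card_ord subn1.
Qed.

Lemma S0_disc (b1 b2 : 'I_n) : b0 != b1 -> b0 != b2 -> b1 != b2 ->
  disconnected_after (@star_adj n 2) S0.
Proof.
move=> h01 h02 h12.
have h10 : b1 != b0 by rewrite eq_sym.
have [a1 a2] := vtE x0 h10; have [c1 c2] := vtE x0 h12.
exists (vt b1 b0 x0), (vt b1 b2 x0); split; rewrite ?inE ?a1 ?c1 ?h10 //.
apply/negP => /(closure (C := [pred v | v2 v == b0])) H.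
have : v2 (vt b1 b2 x0) == b0.
  apply: H; last by rewrite /= a2.
  move=> u w /= /eqP ub; rewrite /del_rel /= !inE => /and3P[uS wS].
  rewrite adjE => /orP[/andP[/eqP w1 _] | /and3P[_ _ /eqP ->]]; last by rewrite ub.
  by move: wS; rewrite w1 ub eqxx.
by rewrite c2 eq_sym (negbTE h02).
Qed.

Lemma S0_deg x : 3 <= n -> x \notin S0 ->
  n - 2 <= #|[set y | (y \notin S0) && star_adj x y]|.
Proof.
move=> n3; rewrite inE => xb.
case: (eqVneq (v2 x) b0) => [x2 | x2].
  have h : v1 x != b0 by rewrite -x2 v12.
  rewrite -(card2C h).
  have inj : {in ~: [set v1 x; b0] &, injective (fun c => vt c b0 x)}.
    move=> c c'; rewrite !inE !negb_or => /andP[_ cb] /andP[_ cb'] e.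
    have [a1 _] := vtE x cb; have [a1' _] := vtE x cb'.
    by rewrite -a1 -a1' e.
  rewrite -(card_in_imset inj); apply: subset_leq_card.
  apply/subsetP => y /imsetP[c]; rewrite !inE !negb_or => /andP[cx cb] ->.
  have [a1 a2] := vtE x cb.
  rewrite a1 cb /=; apply: clique_adj; by rewrite ?a1 ?a2 // eq_sym.
have h12 : v1 x != v2 x := v12 x.
rewrite (_ : n - 2 = (n - 3).+1); last by move: n3; clear; lia.
rewrite -(card3C h12 xb x2).
have inj : {in ~: [set v1 x; v2 x; b0] &, injective (fun c => vt c (v2 x) x)}.
  move=> c c'; rewrite !inE !negb_or -!andbA => /and3P[_ cb _] /and3P[_ cb' _] e.
  have [a1 _] := vtE x cb; have [a1' _] := vtE x cb'.
  by rewrite -a1 -a1' e.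
rewrite -(card_in_imset inj).
have h21 : v2 x != v1 x by rewrite eq_sym.
have [s1 s2] := vtE x h21.
have nin : vt (v2 x) (v1 x) x \notin (fun c => vt c (v2 x) x) @: ~: [set v1 x; v2 x; b0].
  apply/imsetP => -[c]; rewrite !inE !negb_or -!andbA => /and3P[_ cb _] e.
  have [_ a2] := vtE x cb; by move: h21; rewrite -s2 e a2 eqxx.
have := cardsU1 (vt (v2 x) (v1 x) x) ((fun c => vt c (v2 x) x) @: ~: [set v1 x; v2 x; b0]).
rewrite nin add1n => <-; apply: subset_leq_card.
apply/subsetP => y; rewrite !inE => /orP[/eqP -> | /imsetP[c]].
  by rewrite s1 x2 /=; apply: swap_adj.
rewrite !inE !negb_or -!andbA => /and3P[cx cb cb0] ->.
have [a1 a2] := vtE x cb.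
rewrite a1 cb0 /=; apply: clique_adj; by rewrite ?a1 ?a2 // eq_sym.
Qed.
End Up.
End S.

Theorem corollary3p2 (n h : nat) :
  3 <= n -> h <= n - 2 ->
  kappa_s_h_eq (@star_adj n 2) h (n - 1).
Proof.
move=> n3 hn.
pose b0 : 'I_n := Ordinal (leq_trans (isT : 0 < 3) n3).
pose b1 : 'I_n := Ordinal (leq_trans (isT : 1 < 3) n3).
pose b2 : 'I_n := Ordinal (leq_trans (isT : 2 < 3) n3).
have h01 : b0 != b1 by [].
have h02 : b0 != b2 by [].
have h12 : b1 != b2 by [].
have h10 : b1 != b0 by [].
pose x0 : kperm n 2 := exist _ [tuple b1; b0] (isT : uniq [:: b1; b0]).
split.
  exists (S0 b0); split; last exact: (@S0_card n b0 x0).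
  split; first exact: (@S0_disc n b0 x0 b1 b2 h01 h02 h12).
  move=> x xS; apply: leq_trans hn _; exact: (@S0_deg n b0 x n3 xS).
move=> S [[x [y [xS yS nc]]] _].
rewrite leqNgt; apply/negP => lt.
move/negP: nc; apply; apply: conn => //.
  exact: (leq_trans (isT : 2 <= 3) n3).
have m3 : 3 <= n := n3. move: lt m3. clear => H m3. have e : n - 1 = (n - 2).+1 by lia. rewrite e ltnS in H. exact: H.
Qed.
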